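(* Under the setting of the context, let $f^*=\min\{\|F_2\|_1 : S\in\mathbb{R}^{k\times n},\,F_2\in\mathbb{R}^{m\times n},\,A_2=QS+F_2\}$. Then there is a constant $C\ge0$ such that $f^*-\|F_2^{(k)}\|_1\le \frac{C}{\mu_k}$ for all $k=1,2,\dots$.
   Context: For a matrix $X$, $\|X\|_1=\sum_{i,j}|X_{ij}|$, $\|X\|_\infty=\max_{i,j}|X_{ij}|$, $\|X\|_F$ the Frobenius norm, $\langle Y,X\rangle=\mathrm{Trace}(Y^\top X)$. The shrinkage operator $\mathcal{S}_\tau$ acts entrywise by $\mathcal{S}_\tau(x)=\mathrm{sign}(x)\max\{|x|-\tau,0\}$. Augmented Lagrangian: $L(S,F_2,Y,\mu)=\|F_2\|_1+\langle Y,A_2-QS-F_2\rangle+\frac{\mu}{2}\|A_2-QS-F_2\|_F^2$, with $A_2\in\mathbb{R}^{m\times n}$, $A_2\ne0$, $Q\in\mathbb{R}^{m\times k}$, $Q^\top Q=I_k$, $\mu_0>0$, $\rho>1$, and $S^{(0)},F_2^{(0)}$ arbitrary. ALM iteration: $Y^{(0)}=A_2/\|A_2\|_\infty$, and for $k\ge0$: $S^{(k+1)}=Q^\top(A_2-F_2^{(k)}+\frac{1}{\mu_k}Y^{(k)})$, $F_2^{(k+1)}=\mathcal{S}_{1/\mu_k}(A_2-QS^{(k+1)}+\frac{1}{\mu_k}Y^{(k)})$, $Y^{(k+1)}=Y^{(k)}+\mu_k(A_2-QS^{(k+1)}-F_2^{(k+1)})$, $\mu_{k+1}=\rho\mu_k$.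 *)

(* Defs.v *)
From HB Require Import structures.
From mathcomp Require Import all_boot all_order all_algebra.
Set Implicit Arguments. Unset Strict Implicit. Unset Printing Implicit Defensive.
Import Order.TTheory GRing.Theory Num.Theory.
Local Open Scope ring_scope.

Definition norm1 (R : realFieldType) (m n : nat) (X : 'M[R]_(m, n)) : R :=
  \sum_(i < m) \sum_(j < n) `|X i j|.

Definition normInf (R : realFieldType) (m n : nat) (X : 'M[R]_(m, n)) : R :=
  \big[Num.max/0]_(i < m) \big[Num.max/0]_(j < n) `|X i j|.

Definition shrink (R : realFieldType) (tau x : R) : R :=
  Num.sg x * Num.max (`|x| - tau) 0.

Definition shrinkmx (R : realFieldType) (m n : nat) (tau : R) (X : 'M[R]_(m, n))
  : 'M[R]_(m, n) := map_mx (shrink tau) X.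

(* The ALM iterates (S^(k), F_2^(k), Y^(k), mu_k); here p plays the role of the
   paper's inner dimension k (Q is m x p). *)
Fixpoint alm (R : realFieldType) (m n p : nat) (A2 : 'M[R]_(m, n)) (Q : 'M[R]_(m, p))
  (mu0 rho : R) (S0 : 'M[R]_(p, n)) (F0 : 'M[R]_(m, n)) (k : nat)
  : 'M[R]_(p, n) * 'M[R]_(m, n) * 'M[R]_(m, n) * R :=
  match k with
  | 0 => (S0, F0, (normInf A2)^-1 *: A2, mu0)
  | k'.+1 =>
    let: (Sk, F, Y, mu) := alm A2 Q mu0 rho S0 F0 k' in
    let S' := Q^T *m (A2 - F + mu^-1 *: Y) in
    let F' := shrinkmx mu^-1 (A2 - Q *m S' + mu^-1 *: Y) in
    let Y' := Y + mu *: (A2 - Q *m S' - F') in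
    (S', F', Y', rho * mu)
  end.

Definition alm_S R m n p A2 Q mu0 rho S0 F0 k :=
  (@alm R m n p A2 Q mu0 rho S0 F0 k).1.1.1.
Definition alm_F R m n p A2 Q mu0 rho S0 F0 k :=
  (@alm R m n p A2 Q mu0 rho S0 F0 k).1.1.2.
Definition alm_Y R m n p A2 Q mu0 rho S0 F0 k :=
  (@alm R m n p A2 Q mu0 rho S0 F0 k).1.2.
Definition alm_mu R m n p A2 Q mu0 rho S0 F0 k :=
  (@alm R m n p A2 Q mu0 rho S0 F0 k).2.

(* Main.v *)
Require Import Defs.
From HB Require Import structures.
From mathcomp Require Import all_boot all_order all_algebra.
From mathcomp Require Import ring lra.
Import Order.TTheory GRing.Theory Num.Theory.
Local Open Scope ring_scope.

Section Aux.
Variable R : realFieldType.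

Lemma norm1_ge0 m n (X : 'M[R]_(m, n)) : 0 <= norm1 X.
Proof. by rewrite /norm1; apply: sumr_ge0 => i _; apply: sumr_ge0. Qed.

Lemma norm1D m n (X Y : 'M[R]_(m, n)) : norm1 (X + Y) <= norm1 X + norm1 Y.
Proof.
rewrite /norm1 -big_split /=; apply: ler_sum => i _.
rewrite -big_split /=; apply: ler_sum => j _; rewrite mxE; exact: ler_normD.
Qed.

Lemma norm1B m n (X Y : 'M[R]_(m, n)) : norm1 (X - Y) <= norm1 X + norm1 Y.
Proof.
rewrite /norm1 -big_split /=; apply: ler_sum => i _.
rewrite -big_split /=; apply: ler_sum => j _; rewrite !mxE; exact: ler_normB.
Qed.

Lemma norm1Z m n a (X : 'M[R]_(m, n)) : norm1 (a *: X) = `|a| * norm1 X.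
Proof.
rewrite /norm1 mulr_sumr; apply: eq_bigr => i _.
rewrite mulr_sumr; apply: eq_bigr => j _; by rewrite mxE normrM.
Qed.

Lemma norm1_le1 m n (X : 'M[R]_(m, n)) :
  (forall i j, `|X i j| <= 1) -> norm1 X <= (m * n)%N%:R.
Proof.
move=> H; rewrite /norm1.
apply: (@le_trans _ _ (\sum_(i < m) (n%:R : R))).
  apply: ler_sum => i _.
  apply: (@le_trans _ _ (\sum_(j < n) (1 : R))).
    by apply: ler_sum => j _.
  by rewrite sumr_const card_ord.
by rewrite sumr_const card_ord natrM mulr_natl.
Qed.

Lemma mr_r (x y : R) : x <= y -> Num.max x y = y.
Proof.
move=> h; rewrite /Num.max; case: ltrP => // h2; apply/eqP; by rewrite eq_le h h2.
Qed.

Lemma mr_l (x y : R) : y < x -> Num.max x y = x.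
Proof. by move=> h; rewrite /Num.max ltNge (ltW h). Qed.

Lemma shr1 (t x : R) : `|x| <= t -> shrink t x = 0.
Proof.
move=> h; rewrite /shrink.
apply: (@eq_trans _ _ (Num.sg x * 0)); last by rewrite mulr0.
congr (_ * _); apply: mr_r; by rewrite subr_le0.
Qed.

Lemma shr2 (t x : R) : t < `|x| -> shrink t x = Num.sg x * (`|x| - t).
Proof.
move=> h; rewrite /shrink.
congr (_ * _); apply: mr_l; by rewrite subr_gt0.
Qed.

Lemma shrink_bound (mu z : R) : 0 < mu ->
  `|mu * (z - shrink mu^-1 z)| <= 1.
Proof.
move=> mu0.
have hm : mu * mu^-1 = 1 by rewrite mulfV // gt_eqF.
have tp : 0 < mu^-1 by rewrite invr_gt0.
set t := mu^-1 in hm tp *.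
case: (lerP `|z| t) => h.
  rewrite shr1 // subr0 normrM (gtr0_norm mu0).
  rewrite -hm ler_pM2l //.
rewrite shr2 //.
case: (ltrgt0P z) h => [zp|zn|->] h.
- rewrite gtr0_sg // mul1r.
  have -> : z - (z - t) = t by ring.
  by rewrite hm normr1.
- rewrite ltr0_sg //.
  have -> : z - (-1 * (- z - t)) = - t by ring.
  by rewrite mulrN hm normrN normr1.
- by move: h; rewrite ?normr0 => h; lra.
Qed.

End Aux.

Theorem mainTheorem4 (R : realFieldType) (m n p : nat)
  (A2 : 'M[R]_(m, n)) (Q : 'M[R]_(m, p)) (mu0 rho : R)
  (S0 : 'M[R]_(p, n)) (F0 : 'M[R]_(m, n)) (fstar : R) :
  A2 != 0 ->
  Q^T *m Q = 1%:M ->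
  0 < mu0 ->
  1 < rho ->
  (* fstar is the minimum of ||F2||_1 subject to A2 = Q S + F2 *)
  (exists (S : 'M[R]_(p, n)) (F2 : 'M[R]_(m, n)),
      A2 = Q *m S + F2 /\ norm1 F2 = fstar) ->
  (forall (S : 'M[R]_(p, n)) (F2 : 'M[R]_(m, n)),
      A2 = Q *m S + F2 -> fstar <= norm1 F2) ->
  exists C : R, 0 <= C /\
    forall k : nat, (1 <= k)%N ->
      fstar - norm1 (alm_F A2 Q mu0 rho S0 F0 k)
        <= C / alm_mu A2 Q mu0 rho S0 F0 k.
Proof.
move=> _ _ mu0p rho1 _ Hmin.
set mu := alm_mu A2 Q mu0 rho S0 F0.
set F := alm_F A2 Q mu0 rho S0 F0.
set Y := alm_Y A2 Q mu0 rho S0 F0.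
set S := alm_S A2 Q mu0 rho S0 F0.
have rhop : 0 < rho by lra.
have muS k : mu k.+1 = rho * mu k.
  rewrite /mu /alm_mu /=; by case: (alm A2 Q mu0 rho S0 F0 k) => [[[? ?] ?] ?].
have FS k : F k.+1 = shrinkmx (mu k)^-1 (A2 - Q *m S k.+1 + (mu k)^-1 *: Y k).
  rewrite /F /mu /S /Y /alm_F /alm_mu /alm_S /alm_Y /=.
  by case: (alm A2 Q mu0 rho S0 F0 k) => [[[? ?] ?] ?].
have YS k : Y k.+1 = Y k + mu k *: (A2 - Q *m S k.+1 - F k.+1).
  rewrite /F /mu /S /Y /alm_F /alm_mu /alm_S /alm_Y /=.
  by case: (alm A2 Q mu0 rho S0 F0 k) => [[[? ?] ?] ?].
have mup k : 0 < mu k.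
  elim: k => [|k IH]; first by [].
  by rewrite muS mulr_gt0.
have Yb k i j : `|Y k.+1 i j| <= 1.
  set z := (A2 - Q *m S k.+1 + (mu k)^-1 *: Y k) i j.
  have -> : Y k.+1 i j = mu k * (z - shrink (mu k)^-1 z).
    rewrite YS FS /z !mxE.
    have := mup k; move: (mu k) => u up.
    have uu : u * u^-1 = 1 by rewrite mulfV // gt_eqF.
    set a := (Y k i j). set b := (A2 i j - (Q *m S k.+1) i j).
    set c := shrink _ _.
    move: (\sum_j0 _) => s.
    have -> : u * (A2 i j - s + u^-1 * a - c) = u * (A2 i j - s - c) + (u / u) * a by ring.
    rewrite uu mul1r; ring.
  exact: (@shrink_bound R (mu k) z (mup k)).
set K := (m * n)%N%:R + norm1 (Y 0%N).
have Kb k : norm1 (Y k) <= K.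
  case: k => [|k]; first by rewrite /K lerDr.
  apply: (le_trans (@norm1_le1 R _ _ _ (Yb k))).
  by rewrite /K lerDl (@norm1_ge0 R).
have K0 : 0 <= K := le_trans (@norm1_ge0 R _ _ _) (Kb 0%N).
exists (rho * (K + K)); split; first by apply: mulr_ge0; [exact: ltW|lra].
case=> [//|k] _.
have D : A2 - Q *m S k.+1 - F k.+1 = (mu k)^-1 *: (Y k.+1 - Y k).
  rewrite YS [Y k + _]addrC addrK scalerA mulVf ?scale1r //.
  by rewrite gt_eqF ?mup.
have h1 : fstar <= norm1 (A2 - Q *m S k.+1).
  apply: (Hmin (S k.+1)); by rewrite [Q *m _ + _]addrC subrK.
have h2 : norm1 (A2 - Q *m S k.+1) <= norm1 (F k.+1) + norm1 (A2 - Q *m S k.+1 - F k.+1).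
  move: (A2 - Q *m S k.+1) => X.
  have {1}-> : X = F k.+1 + (X - F k.+1) by rewrite [F k.+1 + _]addrC subrK.
  exact: (@norm1D R).
have h3 : norm1 (A2 - Q *m S k.+1 - F k.+1) <= (mu k)^-1 * (K + K).
  rewrite D norm1Z gtr0_norm ?invr_gt0 //.
  rewrite ler_pM2l ?invr_gt0 //.
  apply: (le_trans (@norm1B R _ _ _ _)); exact: lerD.
have -> : rho * (K + K) / mu k.+1 = (mu k)^-1 * (K + K).
  rewrite muS; field.
  by have := mup k; rewrite /mu /alm_mu => h; rewrite !gt_eqF.
have h4 : fstar <= norm1 (F k.+1) + (mu k)^-1 * (K + K).
  apply: (le_trans h1); apply: (le_trans h2); by rewrite lerD2l.
have h5 : fstar - norm1 (F k.+1) <= (mu k)^-1 * (K + K) by rewrite lerBlDl.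
exact: h5.
Qed.
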